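(* Let $a,b\in\mathbb{C}$ with $b\neq0$, and suppose $\cdot_\lambda\cdot$ is a compatible left-symmetric conformal algebraic structure on $\mathcal{W}(a,b)=\mathbb{C}[\partial]L\oplus\mathbb{C}[\partial]W$ such that $\mathbb{C}[\partial]L$ is a left-symmetric conformal subalgebra. Let $c\in\mathbb{C}$ with $L_\lambda L=(\partial+\lambda+c)L$, and write $L_\lambda W=g_1L+g_2W$, $W_\lambda L=h_1L+h_2W$, $W_\lambda W=k_1L+k_2W$ with $g_i,h_i,k_i\in\mathbb{C}[\lambda,\partial]$. Assume $g_2(\lambda,\partial)=\partial+(a-1)\lambda+b+c$ and $h_2(\lambda,\partial)=\partial+\lambda+c$. Then $h_1=g_1=k_1=k_2=0$.
   Context: A conformal algebra is a $\mathbb{C}[\partial]$-module $R$ with a $\mathbb{C}$-bilinear map $R\times R\to R[\lambda]$, $(x,y)\mapsto x_\lambda y$, satisfying $(\partial x)_\lambda y=-\lambda\, x_\lambda y$ and $x_\lambda(\partial y)=(\partial+\lambda)\,x_\lambda y$. For $x,y\in R$, $y_{-\lambda-\partial}x$ means: write $y_\mu x=\sum_j \mu^j z_j$ and set $y_{-\lambda-\partial}x=\sum_j(-\lambda-\partial)^j z_j$. A left-symmetric conformal algebra is a conformal algebra with $(x_\lambda y)_{\lambda+\mu}z-x_\lambda(y_\mu z)=(y_\mu x)_{\lambda+\mu}z-y_\mu(x_\lambda z)$. A compatible left-symmetric conformal algebraic structure on a Lie conformal algebra $(R,[\cdot_\lambda\cdot])$ is a left-symmetric conformal product on the same $\mathbb{C}[\partial]$-module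 with $x_\lambda y-y_{-\lambda-\partial}x=[x_\lambda y]$ for all $x,y$. $\mathcal{W}(a,b)$ is the free $\mathbb{C}[\partial]$-module with basis $L,W$ and Lie conformal brackets $[L_\lambda L]=(\partial+2\lambda)L$, $[L_\lambda W]=(\partial+a\lambda+b)W$, $[W_\lambda W]=0$. ''$\mathbb{C}[\partial]L$ is a left-symmetric conformal subalgebra'' means $L_\lambda L\in(\mathbb{C}[\partial]L)[\lambda]$; in that case $L_\lambda L=(\partial+\lambda+c)L$ for some $c\in\mathbb{C}$. *)

(* Defs.v *)
From HB Require Import structures.
From mathcomp Require Import all_boot all_order all_algebra.
From mathcomp Require Import reals complex.
From mathcomp Require Import mpoly.

Set Implicit Arguments.
Unset Strict Implicit.
Unset Printing Implicit Defensive.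

Import Order.TTheory GRing.Theory Num.Theory.
Local Open Scope ring_scope.

Definition Cplx (R : realType) : Type := R[i].

Inductive basis := bL | bW.

(* Polynomials in (lambda, partial): lambda = 'X_0, partial = 'X_1. *)
Notation P2 R := {mpoly (Cplx R)[2]}.
(* Polynomials in (lambda, mu, partial): lambda = 'X_0, mu = 'X_1, partial = 'X_2. *)
Notation P3 R := {mpoly (Cplx R)[3]}.

(* A lambda-product (equivalently a Lie lambda-bracket) on the free
   C[partial]-module with basis {L, W} is determined, by sesquilinearity,
   by its values on basis elements:  e_i _lambda e_j = sum_k f i j k (lambda, partial) e_k.
   [f i j k] is the coefficient of e_k in  e_i _lambda e_j. *)
Definition lprod (R : realType) := basis -> basis -> basis -> P2 R.

Definition sumb (T : zmodType) (F : basis -> T) : T := F bL + F bW.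

Section Ops.
Variable R : realType.

(* f(-lambda-partial, partial) : computes y_{-lambda-partial} x from y_lambda x. *)
Definition flip (f : P2 R) : P2 R := f \mPo [tuple - 'X_0 - 'X_1; 'X_1].

Definition sub_l_mlm (f : P2 R) : P3 R := f \mPo [tuple 'X_0; - 'X_0 - 'X_1].
Definition sub_m_mlm (f : P2 R) : P3 R := f \mPo [tuple 'X_1; - 'X_0 - 'X_1].
Definition sub_lm_d (f : P2 R) : P3 R := f \mPo [tuple 'X_0 + 'X_1; 'X_2].
Definition sub_l_d (f : P2 R) : P3 R := f \mPo [tuple 'X_0; 'X_2].
Definition sub_m_d (f : P2 R) : P3 R := f \mPo [tuple 'X_1; 'X_2].
Definition sub_m_dl (f : P2 R) : P3 R := f \mPo [tuple 'X_1; 'X_2 + 'X_0].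
Definition sub_l_dm (f : P2 R) : P3 R := f \mPo [tuple 'X_0; 'X_2 + 'X_1].

(* Coefficient of e in (x_lambda y)_{lambda+mu} z, using
   (g(lambda,partial) e_j)_{nu} z = g(lambda,-nu) (e_j)_nu z. *)
Definition assoc1 (f : lprod R) (x y z e : basis) : P3 R :=
  sumb (fun j => sub_l_mlm (f x y j) * sub_lm_d (f j z e)).
(* Coefficient of e in x_lambda (y_mu z), using
   x_lambda (g(mu,partial) e_j) = g(mu, partial+lambda) x_lambda e_j. *)
Definition assoc2 (f : lprod R) (x y z e : basis) : P3 R :=
  sumb (fun j => sub_m_dl (f y z j) * sub_l_d (f x j e)).
(* Coefficient of e in (y_mu x)_{lambda+mu} z *)
Definition assoc1' (f : lprod R) (x y z e : basis) : P3 R :=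
  sumb (fun j => sub_m_mlm (f y x j) * sub_lm_d (f j z e)).
(* Coefficient of e in y_mu (x_lambda z) *)
Definition assoc2' (f : lprod R) (x y z e : basis) : P3 R :=
  sumb (fun j => sub_l_dm (f x z j) * sub_m_d (f y j e)).

(* Left-symmetry:
   (x_l y)_{l+m} z - x_l (y_m z) = (y_m x)_{l+m} z - y_m (x_l z).
   By sesquilinearity it suffices (and is equivalent) to impose it on basis elements. *)
Definition left_symmetric (f : lprod R) : Prop :=
  forall x y z e : basis,
    assoc1 f x y z e - assoc2 f x y z e = assoc1' f x y z e - assoc2' f x y z e.

(* Lie conformal algebra W(a,b):
   [L_l L] = (partial + 2 lambda) L, [L_l W] = (partial + a lambda + b) W,
   [W_l W] = 0, and [W_l L] = - [L_{-l-partial} W] by skew-symmetry. *)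
Definition Wab_LW (a b : Cplx R) (e : basis) : P2 R :=
  match e with bL => 0 | bW => 'X_1 + a *: 'X_0 + b%:MP end.

Definition Wab (a b : Cplx R) : lprod R :=
  fun x y e =>
    match x, y, e with
    | bL, bL, bL => 'X_1 + 2%:R *: 'X_0
    | bL, bL, bW => 0
    | bL, bW, e => Wab_LW a b e
    | bW, bL, e => - flip (Wab_LW a b e)
    | bW, bW, _ => 0
    end.

(* Compatibility:  x_lambda y - y_{-lambda-partial} x = [x_lambda y]
   (again equivalent to its restriction to basis elements). *)
Definition compatible (br f : lprod R) : Prop :=
  forall x y e : basis, f x y e - flip (f y x e) = br x y e.

End Ops.

(* Main.v *)
Require Import Defs.
From HB Require Import structures.
From mathcomp Require Import all_boot all_order all_algebra.
From mathcomp Require Import reals complex.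
From mathcomp Require Import mpoly.
From mathcomp Require Import ring.
Import GRing.Theory.
Local Open Scope ring_scope.

Section Aux.
Variable C : comNzRingType.

Lemma compA n k l (p : {mpoly C[n]}) (t : n.-tuple {mpoly C[k]}) (s : k.-tuple {mpoly C[l]}) :
  (p \mPo t) \mPo s = p \mPo [tuple (tnth t i) \mPo s | i < n].
Proof.
rewrite [p \mPo t]comp_mpolyE [p \mPo _]comp_mpolyE raddf_sum /=; apply: eq_bigr => m _.
rewrite comp_mpolyZ rmorph_prod; congr (_ *: _); apply: eq_bigr => i _.
by rewrite rmorphXn tnth_mktuple.
Qed.

Lemma comp2 k l (p : {mpoly C[2]}) (u v : {mpoly C[k]}) (s : k.-tuple {mpoly C[l]}) :
  (p \mPo [tuple u; v]) \mPo s = p \mPo [tuple u \mPo s; v \mPo s].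
Proof.
rewrite compA; congr comp_mpoly; apply: eq_from_tnth => i.
by rewrite tnth_mktuple; case: i => [[|[|]]] //= ?.
Qed.

Lemma compM n k (p q : {mpoly C[n]}) (s : n.-tuple {mpoly C[k]}) :
  (p * q) \mPo s = (p \mPo s) * (q \mPo s).
Proof. exact: rmorphM. Qed.

Lemma c2X0 k (u v : {mpoly C[k]}) : 'X_0 \mPo [tuple u; v] = u.
Proof. by rewrite comp_mpolyXU. Qed.
Lemma c2X1 k (u v : {mpoly C[k]}) : 'X_1 \mPo [tuple u; v] = v.
Proof. by rewrite comp_mpolyXU. Qed.
Lemma c3X0 k (u v w : {mpoly C[k]}) : 'X_0 \mPo [tuple u; v; w] = u.
Proof. by rewrite comp_mpolyXU. Qed.
Lemma c3X1 k (u v w : {mpoly C[k]}) : 'X_1 \mPo [tuple u; v; w] = v.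
Proof. by rewrite comp_mpolyXU. Qed.
Lemma c3X2 k (u v w : {mpoly C[k]}) : 'X_2 \mPo [tuple u; v; w] = w.
Proof. by rewrite comp_mpolyXU. Qed.

End Aux.

Opaque comp_mpoly.
Definition lcomp := locked (@comp_mpoly).
Lemma lcompE : lcomp = @comp_mpoly. Proof. by rewrite /lcomp -lock. Qed.
Arguments lcomp {_ _ _}.
Notation "p \lPo lq" := (lcomp lq p) (at level 50).
Section LC.
Variable C : comNzRingType.
Implicit Types (n k l : nat).
Lemma lcB n k (s : n.-tuple {mpoly C[k]}) p q : (p - q) \lPo s = (p \lPo s) - (q \lPo s).
Proof. by rewrite lcompE comp_mpolyB. Qed.
Lemma lcD n k (s : n.-tuple {mpoly C[k]}) p q : (p + q) \lPo s = (p \lPo s) + (q \lPo s).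
Proof. by rewrite lcompE comp_mpolyD. Qed.
Lemma lcN n k (s : n.-tuple {mpoly C[k]}) p : (- p) \lPo s = - (p \lPo s).
Proof. by rewrite lcompE comp_mpolyN. Qed.
Lemma lcM n k (s : n.-tuple {mpoly C[k]}) p q : (p * q) \lPo s = (p \lPo s) * (q \lPo s).
Proof. by rewrite lcompE compM. Qed.
Lemma lcZ n k (s : n.-tuple {mpoly C[k]}) a p : (a *: p) \lPo s = a *: (p \lPo s).
Proof. by rewrite lcompE comp_mpolyZ. Qed.
Lemma lcC n k (s : n.-tuple {mpoly C[k]}) a : (a%:MP_[n]) \lPo s = a%:MP_[k].
Proof. by rewrite lcompE comp_mpolyC. Qed.
Lemma lc0 n k (s : n.-tuple {mpoly C[k]}) : (0 : {mpoly C[n]}) \lPo s = 0.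
Proof. by rewrite lcompE comp_mpoly0. Qed.
Lemma lc2X0 k (u v : {mpoly C[k]}) : 'X_0 \lPo [tuple u; v] = u.
Proof. by rewrite lcompE c2X0. Qed.
Lemma lc2X1 k (u v : {mpoly C[k]}) : 'X_1 \lPo [tuple u; v] = v.
Proof. by rewrite lcompE c2X1. Qed.
Lemma lc3X0 k (u v w : {mpoly C[k]}) : 'X_0 \lPo [tuple u; v; w] = u.
Proof. by rewrite lcompE c3X0. Qed.
Lemma lc3X1 k (u v w : {mpoly C[k]}) : 'X_1 \lPo [tuple u; v; w] = v.
Proof. by rewrite lcompE c3X1. Qed.
Lemma lc3X2 k (u v w : {mpoly C[k]}) : 'X_2 \lPo [tuple u; v; w] = w.
Proof. by rewrite lcompE c3X2. Qed.
Lemma lc2 k l (p : {mpoly C[2]}) (u v : {mpoly C[k]}) (s : k.-tuple {mpoly C[l]}) :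
  (p \lPo [tuple u; v]) \lPo s = p \lPo [tuple u \lPo s; v \lPo s].
Proof. by rewrite lcompE comp2. Qed.
End LC.
Lemma lcid2 (C : comNzRingType) (p : {mpoly C[2]}) : p \lPo [tuple 'X_0; 'X_1] = p.
Proof.
rewrite lcompE -[RHS]comp_mpoly_id; congr comp_mpoly; apply: eq_from_tnth => i.
by rewrite tnth_mktuple; case: i => [[|[|]]] //= ?; congr 'X__; apply: val_inj.
Qed.
Theorem lemma3p5 (R : realType) (a b c : Cplx R) (f : lprod R) :
  b != 0 ->
  left_symmetric f ->
  compatible (Wab a b) f ->
  f bL bL bL = 'X_1 + 'X_0 + c%:MP ->
  f bL bL bW = 0 ->
  f bL bW bW = 'X_1 + (a - 1) *: 'X_0 + (b + c)%:MP ->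
  f bW bL bW = 'X_1 + 'X_0 + c%:MP ->
  [/\ f bW bL bL = 0, f bL bW bL = 0, f bW bW bL = 0 & f bW bW bW = 0].
Proof.
move=> b0 LS CP hLL hLLW hg2 hh2.
have cG : f bL bW bL - flip (f bW bL bL) = 0 := CP bL bW bL.
have cK2 : f bW bW bW - flip (f bW bW bW) = 0 := CP bW bW bW.
rewrite /flip -lcompE in cG cK2.
have EA := LS bL bW bW bW.
have EC := LS bL bW bL bL.
have ED := LS bL bW bW bL.
rewrite /assoc1 /assoc2 /assoc1' /assoc2' /sumb /sub_l_mlm /sub_lm_d /sub_m_dl /sub_l_d /sub_m_mlm /sub_l_dm /sub_m_d -!lcompE in EA EC ED.
rewrite ?hLL ?hLLW ?hg2 ?hh2 in EA EC ED.
move: EA EC ED cG cK2; clear LS CP.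
move: (f bL bW bL) (f bW bL bL) (f bW bW bL) (f bW bW bW) => G H K1 K2 EA EC ED cG cK2.
move/(congr1 (lcomp [tuple (0 : P2 R); 'X_0; 'X_1])): EA.
rewrite !(lcB, lcD, lcM) !lc2 !(lcB, lcD, lcN, lcZ, lcC, lc0, lc2X0, lc2X1, lc3X0, lc3X1, lc3X2) => EA.
rewrite ?(oppr0, sub0r, add0r, addr0, subr0, mul0r, mulr0, scaler0, opprK, lcid2) in EA.
move/(congr1 (lcomp [tuple (0 : P2 R); 'X_0; 'X_1])): EC.
rewrite !(lcB, lcD, lcM) !lc2 !(lcB, lcD, lcN, lcZ, lcC, lc0, lc2X0, lc2X1, lc3X0, lc3X1, lc3X2) => EC.
rewrite ?(oppr0, sub0r, add0r, addr0, subr0, mul0r, mulr0, scaler0, opprK, lcid2) in EC.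
move/(congr1 (lcomp [tuple (0 : P2 R); 'X_0; 'X_1])): ED.
rewrite !(lcB, lcD, lcM) !lc2 !(lcB, lcD, lcN, lcZ, lcC, lc0, lc2X0, lc2X1, lc3X0, lc3X1, lc3X2) => ED.
rewrite ?(oppr0, sub0r, add0r, addr0, subr0, mul0r, mulr0, scaler0, opprK, lcid2) in ED.
have cG' : G = H \lPo [tuple - 'X_0 - 'X_1; 'X_1] by apply/eqP; rewrite -subr_eq0 cG.
have cK2' : K2 = K2 \lPo [tuple - 'X_0 - 'X_1; 'X_1] by apply/eqP; rewrite -subr_eq0 cK2.
have cG1 : G \lPo [tuple (0 : P2 R); - 'X_0] = H \lPo [tuple 'X_0; - 'X_0].
  by rewrite {1}cG' lc2 !(lcB, lcN, lc2X0, lc2X1) ?(oppr0, sub0r, opprK).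
rewrite cG1 in EA EC ED.
have A : b%:MP * K2 = - ('X_1 + 'X_0 + c%:MP) * (G \lPo [tuple (0 : P2 R); 'X_1 + 'X_0]).
  move/eqP: EA; rewrite -subr_eq0 => /eqP EA.
  apply/eqP; rewrite -subr_eq0; apply/eqP; rewrite -[RHS]EA.
  rewrite -?mul_mpolyC ?mpolyCD.
  ring.
have Ce : b%:MP * H = ('X_1 + 'X_0 + c%:MP) * (G \lPo [tuple (0 : P2 R); 'X_1]).
  move/eqP: EC; rewrite -subr_eq0 => /eqP EC.
  apply/eqP; rewrite -subr_eq0; apply/eqP; rewrite -[RHS]EC.
  rewrite -?mul_mpolyC ?mpolyCD.
  ring.
have A' : b%:MP * K2 = - ('X_1 + (- 'X_0 - 'X_1) + c%:MP) * (G \lPo [tuple (0 : P2 R); 'X_1 + (- 'X_0 - 'X_1)]).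
  rewrite {1}cK2'.
  have := congr1 (lcomp [tuple - ('X_0 : P2 R) - 'X_1; 'X_1]) A.
  rewrite !(lcM, lcN, lcD, lc2, lc0) !(lcD, lcC, lc2X0, lc2X1).
  by move=> <-.
have q0 : G \lPo [tuple (0 : P2 R); 'X_1] = 0.
  have E1 : ('X_1 + 'X_0 + c%:MP) * (G \lPo [tuple (0 : P2 R); 'X_1 + 'X_0]) = 
            ('X_1 + (- 'X_0 - 'X_1) + c%:MP) * (G \lPo [tuple (0 : P2 R); 'X_1 + (- 'X_0 - 'X_1)]).
    by apply: oppr_inj; rewrite -!mulNr -A -A'.
  have := congr1 (lcomp [tuple (c%:MP : P2 R); 'X_1 - c%:MP]) E1.
  rewrite !(lcM, lcN, lcD, lcB, lc2, lc0) !(lcD, lcB, lcN, lcC, lc2X0, lc2X1).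
  rewrite (_ : 'X_1 - c%:MP + (- c%:MP - ('X_1 - c%:MP)) + c%:MP = 0); last by ring.
  rewrite (_ : 'X_1 - c%:MP + c%:MP = 'X_1); last by ring.
  rewrite mul0r => /eqP; rewrite mulf_eq0 => /orP [|/eqP //].
  move=> /eqP /(congr1 (meval (fun _ => 1 - c))).
  rewrite mevalD mevalXU mevalC meval0 subrK => /eqP; rewrite oner_eq0 //.
have q1 : G \lPo [tuple (0 : P2 R); 'X_1 + 'X_0] = 0.
  have := congr1 (lcomp [tuple ('X_0 : P2 R); 'X_1 + 'X_0]) q0.
  by rewrite lc2 !lc0 lc2X1.
have bnz : (b%:MP : P2 R) != 0 by rewrite mpolyC_eq0.
have hK2 : K2 = 0.
  by move: A; rewrite q1 mulr0 => /eqP; rewrite mulf_eq0 (negbTE bnz) => /eqP.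
have hH : H = 0.
  by move: Ce; rewrite q0 mulr0 => /eqP; rewrite mulf_eq0 (negbTE bnz) => /eqP.
have hG : G = 0 by rewrite cG' hH lc0.
have hK1 : K1 = 0.
  move: ED; rewrite hG hH hK2 !lc0 => /eqP; rewrite -subr_eq0 => /eqP ED.
  have : (b *+ 2)%:MP * K1 = 0.
    rewrite -[RHS]ED -?mul_mpolyC ?mpolyCD; ring.
  move=> /eqP; rewrite mulf_eq0 mpolyC_eq0 Num.Theory.mulrn_eq0 (negbTE b0) /= => /eqP //.
by split.
Qed.
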